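(* Let $f_1,\dots,f_m:\mathbb R^n\to\mathbb R$ be continuously differentiable, $\mu\ge0$, $\gamma_0>0$, $x_0,z_0\in\mathbb R^n$, and let $(\tau_k)_{k\ge0}$ be positive step sizes. Suppose sequences $(\gamma_k),(x_k),(z_k),(y_k)$ satisfy, for all $k\ge0$, the IMEX scheme $$\frac{\gamma_{k+1}-\gamma_k}{\tau_k}=\mu-\gamma_{k+1},\quad \frac{x_{k+1}-x_k}{\tau_k}=z_{k+1}-x_{k+1},\quad \gamma_k\frac{z_{k+1}-z_k}{\tau_k}=\mu(y_k-z_{k+1})-\mathrm{proj}_{C(y_k)}(w_{k+1}),$$ where $y_k=(x_k+\tau_kz_k)/(1+\tau_k)$ and $w_{k+1}=-\mu(z_{k+1}-y_k)+\gamma_k\frac{x_{k+1}-x_k}{\tau_k}-\gamma_k\frac{z_{k+1}-z_k}{\tau_k}$. Then for all $k\ge0$, $$\big\langle\mathrm{proj}_{C(y_k)}(w_{k+1}),x_{k+1}-x_k\big\rangle=\max_{1\le j\le m}\langle\nabla f_j(y_k),x_{k+1}-x_k\rangle.$$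
   Context: $C(y)=\mathrm{conv}\{\nabla f_1(y),\dots,\nabla f_m(y)\}$ and $\mathrm{proj}_C$ is the Euclidean projection onto the closed convex set $C$. *)

(* Defs.v *)
From HB Require Import structures.
From mathcomp Require Import all_boot all_order all_algebra.
From mathcomp Require Import all_classical all_reals all_analysis.
Set Implicit Arguments. Unset Strict Implicit. Unset Printing Implicit Defensive.
Import Order.TTheory GRing.Theory Num.Theory.
Import numFieldNormedType.Exports.
Local Open Scope classical_set_scope.
Local Open Scope ring_scope.

Definition dotv {R : realType} {n : nat} (u v : 'rV[R]_n) : R :=
  \sum_(i < n) u 0 i * v 0 i.

Definition grad {R : realType} {n : nat} (f : 'rV[R]_n -> R) (x : 'rV[R]_n)
  : 'rV[R]_n := \row_(i < n) ('D_(delta_mx 0 i) f x : R).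

Definition C1 {R : realType} {n : nat} (f : 'rV[R]_n -> R) : Prop :=
  (forall x, differentiable f x) /\ continuous (grad f).

Definition convhull {R : realType} {n m : nat} (g : 'I_m -> 'rV[R]_n)
  : set 'rV[R]_n :=
  [set v | exists lam : 'I_m -> R, (forall j, 0 <= lam j) /\
      \sum_(j < m) lam j = 1 /\ v = \sum_(j < m) lam j *: g j].

Definition is_proj {R : realType} {n : nat} (C : set 'rV[R]_n) (w p : 'rV[R]_n)
  : Prop :=
  C p /\ forall q, C q -> dotv (w - p) (w - p) <= dotv (w - q) (w - q).

(* the Euclidean projection onto C (well defined and unique when C is a
   nonempty closed convex set) *)
Definition projC {R : realType} {n : nat} (C : set 'rV[R]_n) (w : 'rV[R]_n)
  : 'rV[R]_n := xget 0 (is_proj C w).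

Definition Cset {R : realType} {n m : nat} (f : 'I_m -> 'rV[R]_n -> R)
  (y : 'rV[R]_n) : set 'rV[R]_n := convhull (fun j => grad (f j) y).

(* Main.v *)
Require Import Defs.
From HB Require Import structures.
From mathcomp Require Import all_boot all_order all_algebra.
From mathcomp Require Import all_classical all_reals all_analysis.
From mathcomp Require Import ring lra.
Import Order.TTheory GRing.Theory Num.Theory.
Import numFieldNormedType.Exports.
Local Open Scope classical_set_scope.
Local Open Scope ring_scope.

Section Aux.
Variable R : realType.
Variable n : nat.
Implicit Types u v a b : 'rV[R]_n.

Lemma dotvC u v : dotv u v = dotv v u.
Proof. by rewrite /dotv; apply: eq_bigr => i _; rewrite mulrC. Qed.
Lemma dotvDl u v a : dotv (u + v) a = dotv u a + dotv v a.
Proof. by rewrite /dotv -big_split; apply: eq_bigr => i _; rewrite mxE mulrDl. Qed.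
Lemma dotvZl (c : R) u a : dotv (c *: u) a = c * dotv u a.
Proof. by rewrite /dotv mulr_sumr; apply: eq_bigr => i _; rewrite mxE mulrA. Qed.
Lemma dotvNl u a : dotv (- u) a = - dotv u a.
Proof. by rewrite -scaleN1r dotvZl mulN1r. Qed.
Lemma dotvBl u v a : dotv (u - v) a = dotv u a - dotv v a.
Proof. by rewrite dotvDl dotvNl. Qed.
Lemma dotvDr u v a : dotv a (u + v) = dotv a u + dotv a v.
Proof. by rewrite dotvC dotvDl !(dotvC a). Qed.
Lemma dotvZr (c : R) u a : dotv a (c *: u) = c * dotv a u.
Proof. by rewrite dotvC dotvZl dotvC. Qed.
Lemma dotvBr u v a : dotv a (u - v) = dotv a u - dotv a v.
Proof. by rewrite dotvC dotvBl !(dotvC a). Qed.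
Lemma dotv_suml (I : Type) (r : seq I) (F : I -> 'rV[R]_n) a :
  dotv (\sum_(i <- r) F i) a = \sum_(i <- r) dotv (F i) a.
Proof.
elim: r => [|h r IH]; first by rewrite !big_nil /dotv big1 // => i _; rewrite mxE mul0r.
by rewrite !big_cons dotvDl IH.
Qed.

Lemma cont_sum (T : topologicalType) (I : Type) (r : seq I) (F : I -> T -> R) :
  (forall i, continuous (F i)) -> continuous (fun x => \sum_(i <- r) F i x).
Proof.
move=> H; elim: r => [|h r IH].
  have -> : (fun x : T => \sum_(i <- [::]) F i x) = (fun=> 0) by apply: funext => x; rewrite big_nil.
  exact: cst_continuous.
have -> : (fun x : T => \sum_(i <- h :: r) F i x) = (F h + (fun x => \sum_(i <- r) F i x))%R.
  by apply: funext => x; rewrite big_cons.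
by move=> x; apply: continuousD; [exact: H | exact: IH].
Qed.
Variable m : nat.
Variable g : 'I_m.+1 -> 'rV[R]_n.

Lemma proj_exists w : exists p, is_proj (convhull g) w p.
Proof.
pose G (v : 'rV[R]_m.+1) := \sum_j v ord0 j *: g j.
pose F (v : 'rV[R]_m.+1) := dotv (w - G v) (w - G v).
pose S := [set v : 'rV[R]_m.+1 | forall i, `[(0:R), 1]%classic (v ord0 i)] `&`
          ((fun v : 'rV[R]_m.+1 => \sum_j v ord0 j) @^-1` [set x | x = 1]).
have csum : continuous (fun v : 'rV[R]_m.+1 => \sum_j v ord0 j).
  by apply: cont_sum => j; exact: coord_continuous.
have cS : compact S.
  apply: compact_closedI.
    apply: (@rV_compact _ _ (fun _ => `[(0:R), 1]%classic)) => i; exact: segment_compact.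
  by apply: preimage_closed; [move=> v _; exact: csum | exact: closed_eq].
have S0 : S !=set0.
  exists (\row_j (j == ord0)%:R); split.
    move=> i /=; rewrite mxE in_itv /=; case: (i == ord0) => /=; lra.
  rewrite /= (bigD1 ord0) //= mxE eqxx big1 ?addr0 // => i /negPf ni.
  by rewrite mxE ni.
have GE (v : 'rV[R]_m.+1) i : G v ord0 i = \sum_j v ord0 j * g j ord0 i.
  by rewrite /G summxE; apply: eq_bigr => j _; rewrite mxE.
have FE : F = fun v : 'rV[R]_m.+1 => \sum_i (w ord0 i - \sum_j v ord0 j * g j ord0 i) *
                         (w ord0 i - \sum_j v ord0 j * g j ord0 i).
  by apply: funext => v; rewrite /F /dotv; apply: eq_bigr => i _; rewrite !mxE GE.
have cF : {within S, continuous F}.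
  apply: continuous_subspaceT; rewrite FE; apply: cont_sum => i.
  have ci : continuous (fun v : 'rV[R]_m.+1 => w ord0 i - \sum_j v ord0 j * g j ord0 i).
    have cs : continuous (fun v : 'rV[R]_m.+1 => \sum_j v ord0 j * g j ord0 i).
      apply: cont_sum => j u.
      exact: (@continuousM R _ (fun v : 'rV[R]_m.+1 => v ord0 j) (fun=> g j ord0 i) u
               (@coord_continuous R _ _ ord0 j u) (@cst_continuous _ _ (g j ord0 i) u)).
    move=> v.
    exact: (cvgB (cvg_cst (w ord0 i)) (cs v)).
  move=> v.
  exact: (@continuousM R _ _ _ v (ci v) (ci v)).
have [c cS' cmin] := compact_EVT_min S0 cS cF.
move: cS'; rewrite inE => -[cI csum1].
exists (G c); split.
  exists (fun j => c ord0 j); split; last by split.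
  by move=> j; have := cI j; rewrite /= in_itv /= => /andP[].
move=> q [lam [l0 [l1 ->]]].
pose v := \row_j lam j.
have Gv : G v = \sum_j lam j *: g j by apply: eq_bigr => j _; rewrite mxE.
rewrite -Gv; apply: (cmin v); rewrite inE; split.
  move=> i /=; rewrite mxE in_itv /= l0 /=.
  rewrite -l1 (bigD1 i) //= lerDl sumr_ge0 // => j _.
by rewrite /= -l1; apply: eq_bigr => j _; rewrite mxE.
Qed.

Lemma small_t (a b : R) : 0 <= b ->
  (forall t : R, 0 < t -> t <= 1 -> 2 * a <= t * b) -> a <= 0.
Proof.
move=> b0 H; rewrite leNgt; apply/negP => a0.
have ab0 : 0 < a + b by lra.
pose t := a / (a + b).
have t0 : 0 < t by rewrite divr_gt0.
have t1 : t <= 1 by rewrite ler_pdivrMr // mul1r; lra.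
have ht : t * (a + b) = a by rewrite /t mulfVK // gt_eqF.
have := H t t0 t1; nra.
Qed.

Lemma proj_vi w p q : is_proj (convhull g) w p -> convhull g q ->
  dotv (w - p) (q - p) <= 0.
Proof.
move=> [pC pmin] [lq [lq0 [lq1 ->]]].
case: pC => lp [lp0 [lp1 pE]].
set Q := \sum_j lq j *: g j.
apply: (@small_t _ (dotv (Q - p) (Q - p))).
  rewrite /dotv; apply: sumr_ge0 => i _; by rewrite -expr2 sqr_ge0. 
move=> t t0 t1.
have inC : convhull g (p + t *: (Q - p)).
  exists (fun j => (1 - t) * lp j + t * lq j); split.
    by move=> j; apply: addr_ge0; apply: mulr_ge0 => //; lra.
  split.
    by rewrite big_split /= -!mulr_sumr lp1 lq1; lra.
  under eq_bigr do rewrite scalerDl -!scalerA.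
  rewrite big_split /= -!scaler_sumr -pE.
  by rewrite scalerBl scale1r scalerBr addrCA addrC.
have := pmin _ inC.
have -> : w - (p + t *: (Q - p)) = (w - p) - t *: (Q - p) by rewrite opprD addrA.
move: (w - p) (Q - p) => u v.
rewrite dotvBl !dotvBr !dotvZl !dotvZr (dotvC v u).
set A := dotv u v; set B := dotv v v; set C := dotv u u.
move=> h.
have : 0 <= t * (t * B - 2 * A) by nra.
rewrite pmulr_rge0 //; lra.
Qed.

Lemma vertex_in j : convhull g (g j).
Proof.
exists (fun i => (i == j)%:R); split; first by move=> i; case: (i == j).
split.
  rewrite (bigD1 j) //= eqxx big1 ?addr0 // => i /negPf -> //.
rewrite (bigD1 j) //= eqxx scale1r big1 ?addr0 // => i /negPf ->.
by rewrite scale0r.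
Qed.
End Aux.

Theorem mainTheorem9 (R : realType) (n m : nat)
  (f : 'I_m.+1 -> 'rV[R]_n -> R) (mu gamma0 : R) (x0 z0 : 'rV[R]_n)
  (tau gamma : nat -> R) (x z : nat -> 'rV[R]_n) :
  (forall j, C1 (f j)) ->
  0 <= mu -> 0 < gamma0 ->
  (forall k, 0 < tau k) ->
  gamma 0%N = gamma0 -> x 0%N = x0 -> z 0%N = z0 ->
  let y k := (1 + tau k)^-1 *: (x k + tau k *: z k) in
  (* w k denotes w_{k+1} *)
  let w k := - (mu *: (z k.+1 - y k)) + gamma k *: ((tau k)^-1 *: (x k.+1 - x k))
    - gamma k *: ((tau k)^-1 *: (z k.+1 - z k)) in
  (forall k, (gamma k.+1 - gamma k) / tau k = mu - gamma k.+1) ->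
  (forall k, (tau k)^-1 *: (x k.+1 - x k) = z k.+1 - x k.+1) ->
  (forall k, gamma k *: ((tau k)^-1 *: (z k.+1 - z k))
             = mu *: (y k - z k.+1) - projC (Cset f (y k)) (w k)) ->
  forall k,
    dotv (projC (Cset f (y k)) (w k)) (x k.+1 - x k)
    = \big[Num.max/dotv (grad (f ord0) (y k)) (x k.+1 - x k)]_(j < m.+1)
        dotv (grad (f j) (y k)) (x k.+1 - x k).
Proof.
move=> _ mu0 g0 tau0 G0 _ _ y w Hg Hx Hz k.
have gpos : forall k, 0 < gamma k.
  elim => [|i IH]; first by rewrite G0.
  have t0 := tau0 i.
  have h : gamma i.+1 - gamma i = tau i * (mu - gamma i.+1).
    by rewrite -Hg mulrC divfK // gt_eqF.
  nra.
set gg := fun j => grad (f j) (y k).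
set p := projC (Cset f (y k)) (w k).
have Pp : is_proj (convhull gg) (w k) p := xgetPex 0 (@proj_exists _ _ _ gg (w k)).
set e := x k.+1 - x k.
have wp : w k - p = (gamma k / tau k) *: e.
  rewrite /w Hz -/p scalerA.
  rewrite -/e -(opprB (z k.+1)) scalerN.
  by rewrite !opprD !opprK !addrA addrK addrAC addNr add0r.
have vb j : dotv (gg j) e <= dotv p e.
  have := @proj_vi _ _ _ gg _ _ _ Pp (@vertex_in _ _ _ gg j).
  rewrite wp dotvZl dotvBr.
  have c0 : 0 < gamma k / tau k by rewrite divr_gt0.
  by rewrite pmulr_rle0 // subr_le0 !(@dotvC _ _ e).
apply/eqP; rewrite eq_le; apply/andP; split.
  case: Pp => [[lp [lp0 [lp1 ->]]] _].
  rewrite dotv_suml.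
  apply: (@le_trans _ _ (\sum_j lp j * \big[Num.max/dotv (grad (f ord0) (y k)) e]_(j < m.+1)
        dotv (grad (f j) (y k)) e)).
    apply: ler_sum => j _; rewrite dotvZl; apply: ler_wpM2l => //.
    exact: (le_bigmax _ (fun j => dotv (grad (f j) (y k)) e) j).
  by rewrite -mulr_suml lp1 mul1r.
apply: bigmax_le => [|j _]; first exact: (vb ord0).
exact: vb.
Qed.
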